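(* The ranges of $\mathcal{A}_1$ and $\mathcal{A}_2$ coincide: $\{\mathcal{A}_1(\nu):\nu\in\mathfrak{M}_L^1(\mathbb{R}^d)\}=\{\mathcal{A}_2(\nu):\nu\in\mathfrak{M}_L^2(\mathbb{R}^d)\}$.
   Context: A Lévy measure on $\mathbb{R}^d$ is a measure $\nu$ with $\nu(\{0\})=0$ and $\int(1\wedge|x|^2)\nu(\mathrm{d}x)<\infty$; their class is $\mathfrak{M}_L^2(\mathbb{R}^d)$, and $\mathfrak{M}_L^1(\mathbb{R}^d)$ is the class of Lévy measures with $\int(1\wedge|x|)\nu(\mathrm{d}x)<\infty$. For $s>0$ set $a_1(r;s)=2\pi^{-1}(s-r^2)^{-1/2}$ for $0<r<s^{1/2}$ and $0$ otherwise; $a_2(r;s)=2\pi^{-1}(s^2-r^2)^{-1/2}$ for $0<r<s$ and $0$ otherwise. For $k=1,2$, $\mathcal{A}_k(\nu)(B)=\int_{\mathbb{R}^d\setminus\{0\}}\nu(\mathrm{d}x)\int_0^\infty a_k(r;|x|)1_B(rx/|x|)\,\mathrm{d}r$, $B$ Borel; its domain (measures mapped to Lévy measures) is $\mathfrak{M}_L^k(\mathbb{R}^d)$. *)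

(* Defs.v *)
From HB Require Import structures.
From mathcomp Require Import all_boot all_order all_algebra.
From mathcomp Require Import all_classical all_reals all_analysis.
Set Implicit Arguments. Unset Strict Implicit. Unset Printing Implicit Defensive.
Import Order.TTheory GRing.Theory Num.Theory.
Import numFieldNormedType.Exports.
Local Open Scope classical_set_scope.
Local Open Scope ring_scope.

(* R^d as row vectors 'rV[R]_d, equipped with its Borel sigma-algebra
   (generated by the open sets of the usual product topology). *)
Notation Rd R d := (g_sigma_algebraType (@open 'rV[R]_d)).

Definition toV {R : realType} {d : nat} (x : Rd R d) : 'rV[R]_d := x.

(* Euclidean norm |x| on R^d (the library norm on matrices is the max norm). *)
Definition enorm {R : realType} {d : nat} (x : 'rV[R]_d) : R :=
  Num.sqrt (\sum_(i < d) x ord0 i ^+ 2).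

Definition a1 {R : realType} (r s : R) : R :=
  if (0 < r) && (r < Num.sqrt s) then 2 / pi * (Num.sqrt (s - r ^+ 2))^-1 else 0.
Definition a2 {R : realType} (r s : R) : R :=
  if (0 < r) && (r < s) then 2 / pi * (Num.sqrt (s ^+ 2 - r ^+ 2))^-1 else 0.

Definition akern {R : realType} (k : nat) : R -> R -> R :=
  if k == 1%N then a1 else a2.

Definition Aintegrand {R : realType} {d : nat} (k : nat) (B : set (Rd R d))
    (x : Rd R d) (r : R) : R :=
  akern k r (enorm (toV x)) *
  \1_B ((r *: ((enorm (toV x))^-1 *: toV x)) : Rd R d).

Definition Aop {R : realType} {d : nat} (k : nat)
    (nu : {measure set (Rd R d) -> \bar R}) (B : set (Rd R d)) : \bar R :=
  (\int[nu]_(x in ([set~ (0%R : 'rV[R]_d)] : set (Rd R d)))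
     (\int[@lebesgue_measure R]_(r in [set r : R | (0 < r)%R])
        (Aintegrand k B x r)%:E))%E.

Definition levy2 {R : realType} {d : nat} (nu : {measure set (Rd R d) -> \bar R}) : Prop :=
  nu ([set (0%R : 'rV[R]_d)] : set (Rd R d)) = 0%E /\
  (\int[nu]_x (Order.min 1 (enorm (toV x) ^+ 2))%R%:E < +oo)%E.

Definition levy1 {R : realType} {d : nat} (nu : {measure set (Rd R d) -> \bar R}) : Prop :=
  levy2 nu /\ (\int[nu]_x (Order.min 1 (enorm (toV x)))%R%:E < +oo)%E.

(* Main.v *)
Require Import Defs.
From HB Require Import structures.
From mathcomp Require Import all_boot all_order all_algebra.
From mathcomp Require Import all_classical all_reals all_analysis.
Import Order.TTheory GRing.Theory Num.Theory.
Import numFieldNormedType.Exports.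
Local Open Scope classical_set_scope.
Local Open Scope ring_scope.

Import HBNNSimple.

Section transfer.
Local Open Scope ereal_scope.
Context d1 d2 (X : measurableType d1) (Y : measurableType d2) (R : realType).
Variables (T : X -> Y) (S : Y -> X).
Hypotheses (mT : measurable_fun setT T) (mS : measurable_fun setT S).
Hypotheses (ST : forall x, S (T x) = x) (TS : forall y, T (S y) = y).

Definition cmpT (h : Y -> R) : X -> R := h \o T.
Definition cmpS (h : X -> R) : Y -> R := h \o S.

Section inst.
Variable h : {nnsfun Y >-> R}.
Let c0 x : (0 <= cmpT h x)%R. Proof. by rewrite /cmpT /=. Qed.
HB.instance Definition _ := @isNonNegFun.Build _ _ _ c0.
Let cm : measurable_fun setT (cmpT h).
Proof. exact: measurableT_comp. Qed.
HB.instance Definition _ := @isMeasurableFun.Build _ _ _ _ _ cm.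
Let cf : finite_set (range (cmpT h)).
Proof. apply: sub_finite_set (fimfunP h) => r [x _ <-]; by exists (T x). Qed.
HB.instance Definition _ := @FiniteImage.Build _ _ _ cf.
End inst.

Section inst2.
Variable h : {nnsfun X >-> R}.
Let c0 x : (0 <= cmpS h x)%R. Proof. by rewrite /cmpS /=. Qed.
HB.instance Definition _ := @isNonNegFun.Build _ _ _ c0.
Let cm : measurable_fun setT (cmpS h).
Proof. exact: measurableT_comp. Qed.
HB.instance Definition _ := @isMeasurableFun.Build _ _ _ _ _ cm.
Let cf : finite_set (range (cmpS h)).
Proof. apply: sub_finite_set (fimfunP h) => r [x _ <-]; by exists (S x). Qed.
HB.instance Definition _ := @FiniteImage.Build _ _ _ cf.
End inst2.

Variable mu : {measure set X -> \bar R}.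

Let pf : {measure set Y -> \bar R} := measure_function_pushforward__canonical__measure_function_Measure mu mT.

Lemma sup_transfer (G : Y -> \bar R) :
  ereal_sup [set sintegral pf h | h in [set h : {nnsfun Y >-> R} | forall y, (h y)%:E <= G y]] =
  ereal_sup [set sintegral mu k | k in [set k : {nnsfun X >-> R} | forall x, (k x)%:E <= G (T x)]].
Proof.
congr ereal_sup; apply/seteqP; split => _ [h hG <-].
  exists (cmpT h : {nnsfun X >-> R}); first by move=> x; exact: hG.
  by [].
exists (cmpS h : {nnsfun Y >-> R}).
  by move=> y /=; rewrite /cmpS /=; have := hG (S y); rewrite TS.
have -> : sintegral pf (cmpS h) = sintegral mu (cmpT (cmpS h)) by [].
apply: eq_sintegral => x; by rewrite /cmpT /cmpS /= ST.
Qed.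

Lemma integral_transfer (D : set Y) (G : Y -> \bar R) :
  (forall y, D y -> 0 <= G y) ->
  \int[pf]_(y in D) G y = \int[mu]_(x in T @^-1` D) G (T x).
Proof.
move=> G0; rewrite !ge0_integralE//; last by move=> x Dx; apply: G0.
rewrite sup_transfer; congr ereal_sup; congr image; apply/funext => k.
Qed.

Lemma le_integral_any (nu : {measure set X -> \bar R}) (D : set X) (f g : X -> \bar R) :
  (forall x, D x -> 0 <= f x) -> (forall x, D x -> f x <= g x) ->
  \int[nu]_(x in D) f x <= \int[nu]_(x in D) g x.
Proof.
move=> f0 fg; rewrite !ge0_integralE//; last by move=> x Dx; exact: le_trans (f0 x Dx) (fg x Dx).
apply: ereal_sup_le => _ [h hf <-]; exists h => // x; apply: le_trans (hf x) _.
rewrite /patch; case: ifP => // /[!in_setE] Dx; exact: fg.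
Qed.

End transfer.

Section norms.
Context {R : realType} {d : nat}.
Implicit Types x y : 'rV[R]_d.

Lemma enorm_ge0 x : 0 <= enorm x.
Proof. exact: sqrtr_ge0. Qed.

Lemma enormZ (c : R) x : enorm (c *: x) = `|c| * enorm x.
Proof.
rewrite /enorm -sqrtr_sqr -sqrtrM ?sqr_ge0// mulr_sumr.
by congr Num.sqrt; apply: eq_bigr => i _; rewrite mxE exprMn.
Qed.

Lemma enorm_eq0 x : enorm x = 0 -> x = 0.
Proof.
move=> /eqP; rewrite sqrtr_eq0 => h.
have h0 : \sum_(i < d) x ord0 i ^+ 2 = 0.
  by apply/le_anti; rewrite h sumr_ge0// => i _; rewrite sqr_ge0.
apply/rowP => i; rewrite mxE.
have /psumr_eq0P := h0 => /(_ (fun i _ => sqr_ge0 _) i isT) /eqP.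
by rewrite sqrf_eq0 => /eqP.
Qed.

Lemma enorm0 : enorm (0 : 'rV[R]_d) = 0.
Proof. by rewrite /enorm big1 ?sqrtr0// => i _; rewrite mxE expr0n. Qed.

Lemma norm_le_enorm x : `|x| <= enorm x.
Proof.
have -> : `|x| = mx_norm x by [].
rewrite mx_normrE; apply: bigmax_le => [|[i j] _]; first exact: enorm_ge0.
rewrite /= (ord1 i) -sqrtr_sqr; apply: ler_wsqrtr.
rewrite (bigD1 j)//= lerDl sumr_ge0// => k _; exact: sqr_ge0.
Qed.

Lemma enorm_continuous : continuous (@enorm R d).
Proof.
have hs : forall s : seq 'I_d, continuous (fun x : 'rV[R]_d => \sum_(i <- s) x ord0 i ^+ 2).
  elim=> [|i s IH].
    have -> : (fun x : 'rV[R]_d => \sum_(i <- [::]) x ord0 i ^+ 2) = fun=> 0.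
      by apply/funext => y; rewrite big_nil.
    exact: cst_continuous.
  have -> : (fun x : 'rV[R]_d => \sum_(j <- i :: s) x ord0 j ^+ 2) =
     (fun x : 'rV[R]_d => x ord0 i * x ord0 i + \sum_(j <- s) x ord0 j ^+ 2).
    by apply/funext => y; rewrite big_cons expr2.
  have hc : continuous (fun M : 'rV[R]_d => M ord0 i * M ord0 i).
    move=> y; exact: (cvgM (@coord_continuous R 1 d ord0 i y) (@coord_continuous R 1 d ord0 i y)).
  move=> x; exact: (cvgD (hc x) (IH x)).
move=> x; apply: (@continuous_comp _ _ _ (fun x : 'rV[R]_d => \sum_(i < d) x ord0 i ^+ 2) Num.sqrt).
  exact: hs.
exact: sqrt_continuous.
Qed.

Definition Tf (x : 'rV[R]_d) : 'rV[R]_d := (Num.sqrt (enorm x))^-1 *: x.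
Definition Sf (x : 'rV[R]_d) : 'rV[R]_d := enorm x *: x.

Lemma sqrt_inv_mul (n : R) : 0 <= n -> (Num.sqrt n)^-1 * n = Num.sqrt n.
Proof.
move=> n0; have [->|nn0] := eqVneq n 0; first by rewrite sqrtr0 invr0 mul0r.
have sn : Num.sqrt n != 0 by rewrite sqrtr_eq0 -ltNge lt_neqAle eq_sym nn0.
by rewrite -[X in _ * X](sqr_sqrtr n0) expr2 mulrA mulVf ?mul1r.
Qed.

Lemma Sf_continuous : continuous Sf.
Proof. move=> x; exact: (cvgZ (enorm_continuous x) cvg_id). Qed.

Lemma sqrt_enorm_continuous : continuous (fun x : 'rV[R]_d => Num.sqrt (enorm x)).
Proof.
move=> x; apply: continuous_comp; [exact: enorm_continuous | exact: sqrt_continuous].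
Qed.

Lemma Tf_continuous : continuous Tf.
Proof.
move=> x; have [x0|x0] := eqVneq (enorm x) 0.
  have -> := enorm_eq0 x x0; rewrite /continuous_at (_ : Tf 0 = 0); last by rewrite /Tf scaler0.
  apply/norm_cvg0P; first exact: nbhs_filter.
  apply: (@squeeze_cvgr _ _ (nbhs_filter (0 : 'rV[R]_d)) _ (fun=> 0) (fun y => Num.sqrt (enorm y))).
  - apply: (@nearW _ _ _ (nbhs_filter (0 : 'rV[R]_d))) => y; rewrite normr_ge0 /=.
    rewrite normrZ ger0_norm ?invr_ge0 ?sqrtr_ge0//.
    rewrite -[X in _ <= X](@sqrt_inv_mul (enorm y) (enorm_ge0 y)).
    by rewrite ler_wpM2l ?invr_ge0 ?sqrtr_ge0// norm_le_enorm.
  - exact: cvg_cst.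
  - have := sqrt_enorm_continuous 0; rewrite /continuous_at enorm0 sqrtr0; exact.
have sx : Num.sqrt (enorm x) != 0 by rewrite sqrtr_eq0 -ltNge lt_neqAle eq_sym x0 enorm_ge0.
exact: (cvgZ (cvgV sx (sqrt_enorm_continuous x)) cvg_id).

Qed.

Lemma cont_meas (f : 'rV[R]_d -> 'rV[R]_d) : continuous f ->
  measurable_fun (setT : set (Rd R d)) (f : Rd R d -> Rd R d).
Proof.
move=> cf; have := (@measurability _ _ (Rd R d) (Rd R d) setT (f : Rd R d -> Rd R d) (@open 'rV[R]_d)). move=> h; apply: h => //.
move=> _ [A oA <-]; apply: sub_sigma_algebra; rewrite setTI.
exact: (proj1 (continuousP f) cf A oA).
Qed.

End norms.

Section main.
Context {R : realType} {d : nat}.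

Lemma enorm_Tf (x : 'rV[R]_d) : enorm (Tf x) = Num.sqrt (enorm x).
Proof.
by rewrite /Tf enormZ ger0_norm ?invr_ge0 ?sqrtr_ge0// sqrt_inv_mul// enorm_ge0.
Qed.

Lemma enorm_Sf (x : 'rV[R]_d) : enorm (Sf x) = enorm x ^+ 2.
Proof. by rewrite /Sf enormZ ger0_norm ?enorm_ge0// expr2. Qed.

Lemma STf (x : Rd R d) : (Sf (Tf x) : Rd R d) = x.
Proof.
rewrite /Sf enorm_Tf /Tf scalerA.
have [x0|x0] := eqVneq (enorm x) 0.
  by rewrite (enorm_eq0 x x0) scaler0.
have sx : Num.sqrt (enorm x) != 0 by rewrite sqrtr_eq0 -ltNge lt_neqAle eq_sym x0 enorm_ge0.
by rewrite mulfV// scale1r.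
Qed.

Lemma TSf (x : Rd R d) : (Tf (Sf x) : Rd R d) = x.
Proof.
rewrite /Tf enorm_Sf sqrtr_sqr ger0_norm ?enorm_ge0// /Sf scalerA.
have [x0|x0] := eqVneq (enorm x) 0.
  by rewrite (enorm_eq0 x x0) scaler0.
by rewrite mulVf// scale1r.
Qed.

Lemma Tf0 : Tf (0 : 'rV[R]_d) = 0.
Proof. by rewrite /Tf scaler0. Qed.

Lemma Sf0 : Sf (0 : 'rV[R]_d) = 0.
Proof. by rewrite /Sf scaler0. Qed.

Lemma preT0 : (Tf @^-1` [set (0 : 'rV[R]_d)] : set (Rd R d)) = [set 0].
Proof.
apply/seteqP; split => x /=.
  by move=> h; rewrite -(STf x) /= h Sf0.
by move=> ->; rewrite Tf0.
Qed.

Lemma preS0 : (Sf @^-1` [set (0 : 'rV[R]_d)] : set (Rd R d)) = [set 0].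
Proof.
apply/seteqP; split => x /=.
  by move=> h; rewrite -(TSf x) /= h Tf0.
by move=> ->; rewrite Sf0.
Qed.

Lemma akern_ge0 k (r s : R) : 0 <= akern k r s.
Proof.
rewrite /akern /a1 /a2; case: ifP => _; case: ifP => _ //;
  by rewrite mulr_ge0 ?divr_ge0 ?invr_ge0 ?sqrtr_ge0 ?pi_ge0.
Qed.

Lemma Aintegrand_ge0 k (B : set (Rd R d)) x r : 0 <= Aintegrand k B x r.
Proof. by rewrite /Aintegrand mulr_ge0 ?akern_ge0. Qed.

Lemma inner_ge0 k (B : set (Rd R d)) x :
  (0 <= \int[@lebesgue_measure R]_(r in [set r : R | (0 < r)%R]) (Aintegrand k B x r)%:E)%E.
Proof. by apply: integral_ge0 => r _; rewrite lee_fin Aintegrand_ge0. Qed.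

Lemma AintT (B : set (Rd R d)) (x : Rd R d) :
  Aintegrand 2 B (Tf x) = Aintegrand 1 B x.
Proof.
apply/funext => r; rewrite /Aintegrand /akern /= /toV enorm_Tf /a1 /a2.
rewrite sqr_sqrtr ?enorm_ge0//.
congr (_ * _); congr (\1_B _); congr (r *: _).
rewrite /Tf scalerA -invfM -expr2 sqr_sqrtr// ?enorm_ge0//. 
Qed.

End main.

Theorem proposition2p10 (R : realType) (d : nat) :
  (forall nu : {measure set (Rd R d) -> \bar R}, levy1 nu ->
     exists mu : {measure set (Rd R d) -> \bar R}, levy2 mu /\
       forall B : set (Rd R d), measurable B -> Aop 1 nu B = Aop 2 mu B) /\
  (forall mu : {measure set (Rd R d) -> \bar R}, levy2 mu ->
     exists nu : {measure set (Rd R d) -> \bar R}, levy1 nu /\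
       forall B : set (Rd R d), measurable B -> Aop 2 mu B = Aop 1 nu B).
Proof.
have mT : measurable_fun (setT : set (Rd R d)) (Tf : Rd R d -> Rd R d).
  exact: cont_meas Tf_continuous.
have mS : measurable_fun (setT : set (Rd R d)) (Sf : Rd R d -> Rd R d).
  exact: cont_meas Sf_continuous.
have trT := @integral_transfer _ _ (Rd R d) (Rd R d) R Tf Sf mT mS STf TSf.
have trS := @integral_transfer _ _ (Rd R d) (Rd R d) R Sf Tf mS mT TSf STf.
have preC0 : forall f : 'rV[R]_d -> 'rV[R]_d,
    (f @^-1` [set 0] : set (Rd R d)) = [set 0] ->
    (f @^-1` [set~ 0] : set (Rd R d)) = [set~ 0].
  by move=> f h; rewrite -preimage_setC h.
split.
  move=> nu [[nu0 nu2] nu1].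
  exists (measure_function_pushforward__canonical__measure_function_Measure nu mT).
  split; last first.
    move=> B _; rewrite /Aop [RHS]trT; last by move=> y _; exact: inner_ge0.
    rewrite (preC0 _ preT0); apply: eq_integral => x _.
    by rewrite AintT.
  split.
    by rewrite /= /pushforward preT0.
  rewrite trT; last by move=> y _; rewrite lee_fin le_min ler01 sqr_ge0.
  rewrite preimage_setT.
  under eq_integral do rewrite enorm_Tf sqr_sqrtr ?enorm_ge0//.
  exact: nu1.
move=> mu [mu0 mu2].
exists (measure_function_pushforward__canonical__measure_function_Measure mu mS).
split; last first.
  move=> B _; rewrite /Aop [RHS]trS; last by move=> y _; exact: inner_ge0.
  rewrite (preC0 _ preS0); apply: eq_integral => x _.
  by rewrite -AintT TSf.
split; first split.
- by rewrite /= /pushforward preS0.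
- rewrite trS; last by move=> y _; rewrite lee_fin le_min ler01 sqr_ge0.
  rewrite preimage_setT.
  apply: le_lt_trans mu2.
  apply: le_integral_any => x _.
    by rewrite lee_fin le_min ler01 sqr_ge0.
  rewrite lee_fin enorm_Sf.
  set a := enorm x ^+ 2.
  have a0 : 0 <= a by rewrite sqr_ge0.
  rewrite le_min ge_min lexx /=.
  have [a1|a1] := leP a 1.
    by rewrite ge_min (_ : a ^+ 2 <= a) ?orbT// expr2 ler_piMl.
  by rewrite ge_min (ltW a1).
- rewrite trS; last by move=> y _; rewrite lee_fin le_min ler01 enorm_ge0.
  rewrite preimage_setT.
  under eq_integral do rewrite enorm_Sf.
  exact: mu2.
Qed.
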